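(* Let $\mathcal{V}$ be a variety of algebras of signature $\Omega$, $\mathcal{C}$ a full subcategory of the category of finitely generated free $\mathcal{V}$-algebras containing the free monogenic algebra $A_0$ on $x_0$, and $\Phi$ an automorphism of $\mathcal{C}$ with main function $(s_A)=(s^\Phi_A)$. Let $A,B$ be $\mathcal{C}$-algebras. Then every homomorphism $\mu:\Phi(A)\to\Phi(B)$ maps $s_A(|A|)$ into $s_B(|B|)$ and its restriction to $s_A(|A|)$ is a homomorphism $A^*\to B^*$. Conversely, every homomorphism $\nu:A^*\to B^*$ is the restriction of exactly one homomorphism $\mu:\Phi(A)\to\Phi(B)$.
   Context: Morphisms of $\mathcal{C}$ are all homomorphisms. For $a\in A$, $\alpha^A_a:A_0\to A$ is the homomorphism with $x_0\mapsto a$. Let $\eta^\Phi_0:\Phi^{-1}(A_0)\to A_0$ be the homomorphism sending every element of a fixed basis of $\Phi^{-1}(A_0)$ to $x_0$ (the identity if $\Phi(A_0)=A_0$), and $\eta^\Phi=\Phi(\eta^\Phi_0)$. The main function is $s_A:|A|\to|\Phi(A)|$, $s_A(a)=\Phi(\alpha^A_a)(\eta^\Phi(x_0))$; it is injective. For a $\mathcal{C}$-algebra $A$, $A^*$ is the $\Omega$-algebra with underlying set $s_A(|A|)\subseteq|\Phi(A)|$ and operations $\omega^*_A(s_A(a_1),\dots,s_A(a_k))=s_A(\omega_A(a_1,\dots,a_k))$ for each $k$-ary $\omega\in\Omega$ and $a_1,\dots,a_k\in|A|$ (so $s_A$ is an isomorphism $A\to A^*$). *)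

(* Defs.v *)
From Stdlib Require Import ClassicalEpsilon.
From mathcomp Require Import ssreflect ssrfun ssrbool eqtype ssrnat seq fintype.

Set Implicit Arguments.
Unset Strict Implicit.
Unset Printing Implicit Defensive.

Record signature := Signature { op_sym : Type; arity : op_sym -> nat }.

Record algebra (S : signature) := Algebra {
  carrier :> Type;
  ops : forall w : op_sym S, ('I_(arity w) -> carrier) -> carrier }.
Arguments ops {S} a w _ : rename.

Section Algebras.
Variable S : signature.

Definition is_hom (A B : algebra S) (f : A -> B) : Prop :=
  forall (w : op_sym S) (args : 'I_(arity w) -> A),
    f (ops A w args) = ops B w (fun i => f (args i)).

Definition hom (A B : algebra S) := {f : A -> B | is_hom f}.

Lemma is_hom_id (A : algebra S) : is_hom (fun x : A => x).
Proof. by []. Qed.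

Lemma is_hom_comp (A B C : algebra S) (g : hom B C) (f : hom A B) :
  is_hom (fun x => proj1_sig g (proj1_sig f x)).
Proof.
move=> w args; rewrite (proj2_sig f) (proj2_sig g) //.
Qed.

Definition idh (A : algebra S) : hom A A := exist _ _ (@is_hom_id A).
Definition comph (A B C : algebra S) (g : hom B C) (f : hom A B) : hom A C :=
  exist _ _ (is_hom_comp g f).

Inductive term : Type :=
| Var : nat -> term
| App : forall w : op_sym S, ('I_(arity w) -> term) -> term.

Fixpoint eval (A : algebra S) (v : nat -> A) (t : term) : A :=
  match t with
  | Var n => v n
  | App w args => ops A w (fun i => eval v (args i))
  end.

(* The variety V defined by a set of identities E (Birkhoff). *)
Definition in_variety (E : term -> term -> Prop) (A : algebra S) : Prop :=
  forall t u, E t u -> forall v : nat -> A, eval v t = eval v u.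

Definition is_free_on (E : term -> term -> Prop) (A : algebra S) (X : A -> Prop) : Prop :=
  in_variety E A /\
  forall B : algebra S, in_variety E B ->
    forall g : A -> B,
      (exists h : hom A B, forall x, X x -> proj1_sig h x = g x) /\
      (forall h1 h2 : hom A B, (forall x, X x -> proj1_sig h1 x = proj1_sig h2 x) ->
          forall a, proj1_sig h1 a = proj1_sig h2 a).

Definition fg_free (E : term -> term -> Prop) (A : algebra S) : Prop :=
  exists X : A -> Prop, (exists l : list A, forall x, X x -> List.In x l) /\
                        @is_free_on E A X.

Definition obj (Cobj : algebra S -> Prop) := {A : algebra S | Cobj A}.

(* An automorphism (isomorphism of categories C -> C) of the full subcategory C,
   whose morphisms are all homomorphisms: a functor which is bijective on
   objects and bijective on each hom-set. *)
Record cat_auto (Cobj : algebra S -> Prop) := CatAuto {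
  Fo : obj Cobj -> obj Cobj;
  Fh : forall A B : obj Cobj, hom (proj1_sig A) (proj1_sig B) ->
         hom (proj1_sig (Fo A)) (proj1_sig (Fo B));
  F_id : forall A : obj Cobj, Fh (idh (proj1_sig A)) = idh (proj1_sig (Fo A));
  F_comp : forall (A B C : obj Cobj) (g : hom (proj1_sig B) (proj1_sig C))
             (f : hom (proj1_sig A) (proj1_sig B)),
             Fh (comph g f) = comph (Fh g) (Fh f);
  Fo_bij : bijective Fo;
  Fh_bij : forall A B : obj Cobj, bijective (@Fh A B) }.

(* The algebra A^* : carrier s(|A|) inside T, operations transported along s
   (preimages are chosen; when s is injective this is exactly the paper's definition). *)
Definition star_pre (A T : algebra S) (s : A -> T) (y : {y : T | exists a, s a = y}) : A :=
  proj1_sig (constructive_indefinite_description _ (proj2_sig y)).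

Definition star_alg (A T : algebra S) (s : A -> T) : algebra S :=
  @Algebra S {y : T | exists a, s a = y}
    (fun w args => exist _ (s (ops A w (fun i => star_pre (args i))))
                         (ex_intro _ _ erefl)).

End Algebras.

Arguments Fo {S Cobj} c _.
Arguments Fh {S Cobj} c {A B} _.

(* The main function s_A(a) = Phi(alpha_a)(e), where e = eta^Phi(x0). *)
Definition main_fun (S : signature) (Cobj : algebra S -> Prop) (Phi : cat_auto Cobj)
  (A0 : obj Cobj) (alpha : forall A : obj Cobj, proj1_sig A -> hom (proj1_sig A0) (proj1_sig A))
  (e : proj1_sig (Fo Phi A0)) (A : obj Cobj) (a : proj1_sig A) : proj1_sig (Fo Phi A) :=
  proj1_sig (Fh Phi (alpha A a)) e.

(* Main.v *)
Require Import Defs.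
From Stdlib Require Import ClassicalEpsilon.
From Stdlib Require Import Classical FunctionalExtensionality ProofIrrelevance.
From mathcomp Require Import ssreflect ssrfun ssrbool eqtype ssrnat seq fintype.

Theorem theorem3
  (S : signature) (E : term S -> term S -> Prop)
  (Cobj : algebra S -> Prop)
  (HC : forall A : algebra S, Cobj A -> fg_free E A)
  (A0 : algebra S) (x0 : A0) (HA0C : Cobj A0)
  (HA0 : @is_free_on S E A0 (fun x => x = x0))
  (Phi : cat_auto Cobj)
  (alpha : forall A : obj Cobj, proj1_sig A -> hom A0 (proj1_sig A))
  (Halpha : forall (A : obj Cobj) (a : proj1_sig A), proj1_sig (alpha A a) x0 = a)
  (P : obj Cobj) (HP : Fo Phi P = exist Cobj A0 HA0C)
  (Y : proj1_sig P -> Prop) (HY : @is_free_on S E (proj1_sig P) Y)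
  (eta0 : hom (proj1_sig P) A0)
  (Heta0 : forall y, Y y -> proj1_sig eta0 y = x0)
  (Heta0id : forall H : P = exist Cobj A0 HA0C, forall x : proj1_sig P,
      proj1_sig eta0 x = eq_rect P (fun o => proj1_sig o : Type) x _ H)
  (A B : obj Cobj) :
  let e : proj1_sig (Fo Phi (exist Cobj A0 HA0C)) :=
    proj1_sig (Fh Phi (B := exist Cobj A0 HA0C) eta0)
      (eq_rect (exist Cobj A0 HA0C) (fun o => proj1_sig o : Type) x0 _ (esym HP)) in
  let s := @main_fun S Cobj Phi (exist Cobj A0 HA0C) alpha e in
  let Astar := star_alg (s A) in
  let Bstar := star_alg (s B) in
  (forall mu : hom (proj1_sig (Fo Phi A)) (proj1_sig (Fo Phi B)),
      (forall a : proj1_sig A, exists b : proj1_sig B, proj1_sig mu (s A a) = s B b) /\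
      exists h : hom Astar Bstar,
        forall y : Astar, proj1_sig (proj1_sig h y) = proj1_sig mu (proj1_sig y)) /\
  (forall nu : hom Astar Bstar,
      exists mu : hom (proj1_sig (Fo Phi A)) (proj1_sig (Fo Phi B)),
        (forall y : Astar, proj1_sig mu (proj1_sig y) = proj1_sig (proj1_sig nu y)) /\
        (forall mu' : hom (proj1_sig (Fo Phi A)) (proj1_sig (Fo Phi B)),
           (forall y : Astar, proj1_sig mu' (proj1_sig y) = proj1_sig (proj1_sig nu y)) ->
           forall x, proj1_sig mu' x = proj1_sig mu x)).
Proof.
move=> e s Astar Bstar.
have hom_ext : forall (X Z : algebra S) (f g : hom X Z),
    (forall x, proj1_sig f x = proj1_sig g x) -> f = g.
  move=> X Z [f fh] [g gh] /= H.
  have ? : f = g by apply: functional_extensionality.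
  subst g; by rewrite (proof_irrelevance _ fh gh).
have sig_ext : forall (T : Type) (Q : T -> Prop) (u v : sig Q), proj1_sig u = proj1_sig v -> u = v.
  move=> T Q [u pu] [v pv] /= H; subst v; by rewrite (proof_irrelevance _ pu pv).
have invar : forall X : obj Cobj, in_variety E (proj1_sig X).
  move=> X. by case: (HC _ (proj2_sig X)) => Z [_ [? _]].
have Fcomp : forall (U V W : obj Cobj) (g : hom (proj1_sig V) (proj1_sig W))
    (f : hom (proj1_sig U) (proj1_sig V)) x,
    proj1_sig (Fh Phi (comph g f)) x = proj1_sig (Fh Phi g) (proj1_sig (Fh Phi f) x).
  move=> U V W g f x. by rewrite F_comp.
have Finj : forall U V : obj Cobj, injective (@Fh _ _ Phi U V).
  move=> U V; exact: bij_inj (Fh_bij Phi U V).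
have A0uniq : forall (X : algebra S), in_variety E X -> forall h1 h2 : hom A0 X,
    proj1_sig h1 x0 = proj1_sig h2 x0 -> h1 = h2.
  move=> X HX h1 h2 H; apply: hom_ext.
  case: HA0 => _ /(_ X HX (fun _ => proj1_sig h1 x0)) [_ Un].
  by apply: Un => x ->.
have alpha_nat : forall (U V : obj Cobj) (m : hom (proj1_sig U) (proj1_sig V)) a,
    comph m (alpha U a) = alpha V (proj1_sig m a).
  move=> U V m a; apply: A0uniq; first exact: invar.
  by rewrite /= !Halpha.
have s_nat : forall (U V : obj Cobj) (m : hom (proj1_sig U) (proj1_sig V)) a,
    proj1_sig (Fh Phi m) (s U a) = s V (proj1_sig m a).
  move=> U V m a. rewrite /s /main_fun -Fcomp. by rewrite alpha_nat.
have Ptrans : forall (Q : obj Cobj) (H : Q = exist Cobj A0 HA0C) (X : algebra S),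
    in_variety E X -> forall h1 h2 : hom (proj1_sig Q) X,
    proj1_sig h1 (eq_rect (exist Cobj A0 HA0C) (fun o => proj1_sig o : Type) x0 Q (esym H))
    = proj1_sig h2 (eq_rect (exist Cobj A0 HA0C) (fun o => proj1_sig o : Type) x0 Q (esym H)) -> h1 = h2.
  move=> Q H X HX h1 h2. subst Q. exact: A0uniq HX h1 h2.
have s_inj : forall (X : obj Cobj) (a b : proj1_sig X), s X a = s X b -> a = b.
  move=> X a b.
  rewrite /s /main_fun /e -!Fcomp.
  move/(Ptrans _ HP _ (invar (Fo Phi X)) _ _)/Finj => Heq.
  have Hp : forall p, proj1_sig (alpha X a) (proj1_sig eta0 p)
                    = proj1_sig (alpha X b) (proj1_sig eta0 p).
    by move=> p; move: (congr1 (fun h => proj1_sig h p) Heq).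
  case: (classic (exists y, Y y)) => [[y Yy] | NY].
    by move: (Hp y); rewrite Heta0 // !Halpha.
  have Pu : forall Z (HZ : in_variety E Z) (h1 h2 : hom (proj1_sig P) Z), h1 = h2.
    move=> Z HZ h1 h2; apply: hom_ext.
    case: HY => _ /(_ Z HZ (proj1_sig h1)) [_ Un].
    apply: Un => y Yy; exfalso; apply: NY; by exists y.
  case: (Fo_bij Phi) => g _ gK.
  have FX : Fo Phi (g X) = X := gK X.
  have Hall : forall g1 g2 : hom (proj1_sig (Fo Phi P)) (proj1_sig (Fo Phi (g X))), g1 = g2.
    move=> g1 g2. case: (Fh_bij Phi P (g X)) => k _ kK.
    by rewrite -(kK g1) -(kK g2) (Pu _ (invar _) (k g1) (k g2)).
  move: Hall. rewrite FX HP => Hall.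
  by rewrite -(Halpha X a) -(Halpha X b) (Hall (alpha X a) (alpha X b)).
have pre_spec : forall (X : obj Cobj) (y : star_alg (s X)), s X (star_pre y) = proj1_sig y.
  move=> X y; rewrite /star_pre.
  by case: (constructive_indefinite_description _ _).
split.
  move=> mu. case: (Fh_bij Phi A B) => k _ kK.
  have Hmu : mu = Fh Phi (k mu) := esym (kK mu).
  set m := k mu.
  have Hs : forall a, proj1_sig mu (s A a) = s B (proj1_sig m a).
    by move=> a; rewrite Hmu s_nat.
  split; first by move=> a; exists (proj1_sig m a).
  have Hex : forall y : Astar, exists b, s B b = proj1_sig mu (proj1_sig y).
    by move=> [v [a pa]]; subst v; exists (proj1_sig m a); rewrite Hs.
  pose hf := fun y : Astar =>
    (exist (fun v => exists b, s B b = v) (proj1_sig mu (proj1_sig y)) (Hex y) : carrier Bstar).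
  have hf_hom : @is_hom S Astar Bstar hf.
    move=> w args; apply: sig_ext => /=.
    rewrite Hs (proj2_sig m).
    congr (s B (ops _ w _)); apply: functional_extensionality => i.
    apply: (s_inj B). by rewrite pre_spec /= -Hs pre_spec.
  by exists (exist _ hf hf_hom).
move=> nu.
pose inA := fun a : proj1_sig A =>
  (exist (fun v => exists a', s A a' = v) (s A a) (ex_intro _ a erefl) : carrier Astar).
have preA : forall a, star_pre (inA a) = a.
  by move=> a; apply: (s_inj A); rewrite pre_spec.
pose n := fun a : proj1_sig A => star_pre (proj1_sig nu (inA a)).
have Hn : is_hom n.
  move=> w as_.
  rewrite /n; have -> : inA (ops (proj1_sig A) w as_) = ops Astar w (fun i => inA (as_ i)).
    apply: sig_ext => /=. congr (s A (ops _ w _)).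
    by apply: functional_extensionality => i; rewrite preA.
  rewrite (proj2_sig nu); apply: (s_inj B); by rewrite pre_spec.
pose mu := Fh Phi (exist _ n Hn : hom (proj1_sig A) (proj1_sig B)).
have Hmu : forall a, proj1_sig mu (s A a) = proj1_sig (proj1_sig nu (inA a)).
  by move=> a; rewrite /mu s_nat /= pre_spec.
exists mu; split.
  move=> [v [a pa]]; subst v. exact: Hmu.
move=> mu' Hmu' x.
case: (Fh_bij Phi A B) => k _ kK.
have -> : mu' = mu.
  rewrite -(kK mu'). rewrite /mu. congr (Fh Phi _). apply: hom_ext => a /=.
  apply: (s_inj B). rewrite -s_nat kK (Hmu' (inA a)) /n pre_spec //.
by [].
Qed.
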